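(* Let $k \geq 2$ be an integer. Let $G$ be a finite simple graph with $|V(G)| = \gamma k$ where $\gamma \geq \frac{5}{2}$, and suppose that $\frac{1}{k^2}|E(G)| > \frac{19}{12}(\gamma - 1)$. Then $G$ contains a $(k+1)$-connected subgraph. Equivalently, every $n$-vertex graph with $n \geq \frac{5}{2}k$ and more than $\frac{19}{12}k(n-k)$ edges contains a $(k+1)$-connected subgraph.
   Context: All graphs are finite, undirected and simple. A graph $H$ is $(k+1)$-connected if for every set $S \subseteq V(H)$ with $|S| = k$, the graph $H - S$ (obtained by deleting $S$) is connected and has at least two vertices; in particular $|V(H)| \geq k+2$. *)

(* Defs.v *)
(* Simple graphs: symmetric irreflexive relation e on a finType T. *)
From mathcomp Require Import all_boot all_order all_algebra.
Set Implicit Arguments. Unset Strict Implicit. Unset Printing Implicit Defensive.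

Definition edges (T : finType) (e : rel T) : {set {set T}} :=
  [set [set p.1; p.2] | p : T * T & e p.1 p.2].

Definition connected_on (T : finType) (W : {set T}) (f : rel T) : Prop :=
  forall x y, x \in W -> y \in W ->
    connect [rel u v | [&& u \in W, v \in W & f u v]] x y.

Definition k1_connected (T : finType) (k : nat) (U : {set T}) (f : rel T) : Prop :=
  k.+2 <= #|U| /\
  forall S : {set T}, S \subset U -> #|S| = k ->
    connected_on (U :\: S) f /\ 2 <= #|U :\: S|.

Definition has_k1_connected_subgraph (T : finType) (e : rel T) (k : nat) : Prop :=
  exists (U : {set T}) (f : rel T),
    (forall x y, f x y -> [&& x \in U, y \in U & e x y]) /\
    symmetric f /\ irreflexive f /\ k1_connected k U f.

(* Main.v *)
Require Import Defs.
From mathcomp Require Import all_boot all_order all_algebra.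
From mathcomp Require Import zify ring lra.
From Stdlib Require Import Classical.
Set Implicit Arguments. Unset Strict Implicit. Unset Printing Implicit Defensive.


Section G.
Variable T : finType.
Variable e : rel T.
Hypothesis esym : symmetric e.
Hypothesis eirr : irreflexive e.

Definition Nb (u : T) (Y : {set T}) : {set T} := [set v in Y | e u v].
Definition E2 (X Y : {set T}) : nat := \sum_(u in X) #|Nb u Y|.

Lemma Nb_sum u (Y : {set T}) : #|Nb u Y| = \sum_(v in Y) (e u v : nat).
Proof.
rewrite /Nb -sum1_card big_mkcond [RHS]big_mkcond /=.
apply: eq_bigr => v _; rewrite inE; by case: (v \in Y); case: (e u v).
Qed.

Lemma E2_sym (X Y : {set T}) : E2 X Y = E2 Y X.
Proof.
rewrite /E2; under eq_bigr => u _ do rewrite Nb_sum.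
rewrite exchange_big; apply: eq_bigr => v _; rewrite Nb_sum.
by apply: eq_bigr => u _; rewrite esym.
Qed.

Lemma E2_Ul (X1 X2 Y : {set T}) : [disjoint X1 & X2] -> E2 (X1 :|: X2) Y = E2 X1 Y + E2 X2 Y.
Proof.
move=> d; rewrite /E2 (eq_bigl [predU X1 & X2]) ?bigU // => i; by rewrite !inE.
Qed.

Lemma E2_Ur (X Y1 Y2 : {set T}) : [disjoint Y1 & Y2] -> E2 X (Y1 :|: Y2) = E2 X Y1 + E2 X Y2.
Proof.
move=> d; rewrite /E2 -big_split /=; apply: eq_bigr => u _.
rewrite !Nb_sum (eq_bigl [predU Y1 & Y2]) ?bigU // => i; by rewrite !inE.
Qed.

Lemma E2_set1l u (Y : {set T}) : E2 [set u] Y = #|Nb u Y|.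
Proof. by rewrite /E2 big_set1. Qed.

Lemma E2_le (X Y : {set T}) : E2 X Y <= #|X| * #|Y|.
Proof.
rewrite /E2 -sum_nat_const; apply: leq_sum => u _.
by apply: subset_leq_card; apply/subsetP => v; rewrite inE => /andP[].
Qed.

Lemma Nb_self u (X : {set T}) : #|Nb u X| <= #|X| - (u \in X).
Proof.
case uX: (u \in X); last by rewrite subn0; apply: subset_leq_card; apply/subsetP => v; rewrite inE => /andP[].
rewrite (cardsD1 u X) uX /= add1n subn1.
apply: subset_leq_card; apply/subsetP => v; rewrite !inE => /andP[vX euv].
rewrite vX andbT; apply/eqP => vu; by rewrite vu eirr in euv.
Qed.

Lemma E2_self (X : {set T}) : E2 X X <= #|X| * (#|X| - 1).
Proof.
rewrite /E2 -sum_nat_const; apply: leq_sum => u uX.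
by have := Nb_self u X; rewrite uX.
Qed.

Lemma E2_0l (Y : {set T}) : E2 set0 Y = 0.
Proof. by rewrite /E2 big_set0. Qed.
End G.


Section G.
Variable T : finType.
Variable e : rel T.
Hypothesis esym : symmetric e.
Hypothesis eirr : irreflexive e.
Variable k : nat.

Definition fW (W : {set T}) : rel T := [rel x y | [&& x \in W, y \in W & e x y]].

Lemma pick_out (Y T0 : {set T}) : #|T0| < #|Y| -> exists w, w \in Y /\ w \notin T0.
Proof.
move=> lt; have : 0 < #|Y :\: T0|.
  rewrite cardsD; have : #|Y :&: T0| <= #|T0| by apply: subset_leq_card; apply: subsetIr.
  lia.
by case/card_gt0P => w; rewrite inE => /andP[wT wY]; exists w.
Qed.

Lemma conn_lemma (W A : {set T}) :
  A \subset W -> k.+2 <= #|A| ->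
  (forall u, u \in A -> #|W| + k <= (2 * #|Nb e u W|).+1) ->
  (forall s, s \in W -> s \notin A -> k < #|Nb e s A|) ->
  k1_connected k W (fW W).
Proof.
move=> AW hA hu hs; split.
  by apply: leq_trans hA (subset_leq_card AW).
move=> T0 T0W cT0.
have cX : #|W :\: T0| = #|W| - k by rewrite cardsDS // cT0.
have hW : #|A| <= #|W| := subset_leq_card AW.
split; last by rewrite cX; lia.
set X := W :\: T0.
set Rr := [rel u v | [&& u \in X, v \in X & fW W u v]].
have symR : symmetric Rr.
  by move=> u v; rewrite /Rr /fW /= esym; do 2!case: (_ \in X); do 2!case: (_ \in W).
have cs := sym_connect_sym symR.
have XW : forall z, z \in X -> z \in W by move=> z; rewrite inE => /andP[].
have hAA : forall u v, u \in A -> v \in A -> u \in X -> v \in X -> connect Rr u v.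
  move=> u v uA vA uX vX.
  have uW := XW _ uX; have vW := XW _ vX.
  case: (eqVneq u v) => [->|uv]; first exact: connect0.
  case euv: (e u v).
    by apply: connect1; rewrite /= uX vX /fW /= uW vW euv.
  have sub : Nb e u W :|: Nb e v W \subset (W :\ u) :\ v.
    apply/subsetP => w; rewrite !inE => /orP[]/andP[wW ew]; rewrite wW andbT.
      apply/andP; split; apply/eqP => h; subst w.
        by rewrite euv in ew.
      by rewrite eirr in ew.
    apply/andP; split; apply/eqP => h; subst w.
      by rewrite eirr in ew.
    by rewrite esym euv in ew.
  have c1 := subset_leq_card sub.
  have c2 : #|(W :\ u) :\ v| = #|W| - 2.
    rewrite (cardsD1 u W) uW in hW *; rewrite (cardsD1 v (W :\ u)) !inE eq_sym uv vW /=.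
    lia.
  have c3 := cardsUI (Nb e u W) (Nb e v W).
  have h1 := hu u uA; have h2 := hu v vA.
  have [w [wI wT]] : exists w, w \in Nb e u W :&: Nb e v W /\ w \notin T0.
    apply: pick_out; rewrite cT0; lia.
  move: wI; rewrite !inE => /andP[/andP[wW euw] /andP[_ evw]].
  have wX : w \in X by rewrite inE wT wW.
  apply: (@connect_trans _ _ w); apply: connect1; rewrite /= ?uX ?wX ?vX /fW /= ?uW ?wW ?vW //.
  by rewrite esym.
have hS : forall s, s \in X -> exists2 u, u \in A /\ u \in X & connect Rr s u.
  move=> s sX; case sA: (s \in A); first by exists s => //; exact: connect0.
  have [u [uN uT]] : exists u, u \in Nb e s A /\ u \notin T0.
    apply: pick_out; rewrite cT0; apply: hs; [exact: XW | by rewrite sA].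
  move: uN; rewrite inE => /andP[uA esu].
  have uW : u \in W := subsetP AW u uA.
  have uX : u \in X by rewrite inE uT uW.
  exists u => //; apply: connect1; by rewrite /= sX uX /fW /= (XW _ sX) uW esu.
move=> x y xX yX.
have [ux [uxA uxX] cx] := hS x xX; have [uy [uyA uyX] cy] := hS y yX.
apply: (connect_trans cx); apply: (connect_trans (hAA _ _ uxA uyA uxX uyX)).
by rewrite cs.
Qed.

Lemma has_of_conn (W : {set T}) : k1_connected k W (fW W) -> has_k1_connected_subgraph e k.
Proof.
move=> h; exists W, (fW W); split; first by move=> x y.
split; first by move=> x y; rewrite /fW /= esym; do 2!case: (_ \in W).
split=> // x; by rewrite /fW /= eirr !andbF.
Qed.
End G.


Section G.
Variable T : finType.
Variable e : rel T.
Hypothesis esym : symmetric e.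
Hypothesis eirr : irreflexive e.
Variable k : nat.
Hypothesis Hno : ~ has_k1_connected_subgraph e k.

Lemma E2_UU (X Y : {set T}) : [disjoint X & Y] ->
  E2 e (X :|: Y) (X :|: Y) = E2 e X X + 2 * E2 e X Y + E2 e Y Y.
Proof.
move=> d; rewrite E2_Ul // !E2_Ur // (E2_sym esym Y X); lia.
Qed.

Lemma E2_zero (X Y : {set T}) : (forall u v, u \in X -> v \in Y -> ~~ e u v) -> E2 e X Y = 0.
Proof.
move=> h; rewrite /E2 big1 // => u uX; apply/eqP; rewrite cards_eq0; apply/eqP.
apply/setP => v; rewrite !inE; apply/negbTE; apply/negP => /andP[vY euv].
by have := h u v uX vY; rewrite euv.
Qed.

Definition sepP (W S A B : {set T}) :=
  [/\ S \subset W, #|S| = k, (A != set0) && (B != set0),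
      [/\ [disjoint A & S], [disjoint B & S], [disjoint A & B] & W = (A :|: S) :|: B]
    & forall u v, u \in A -> v \in B -> ~~ e u v].

Lemma sepP_sym W S A B : sepP W S A B -> sepP W S B A.
Proof.
case=> h1 h2 /andP[h3 h4] [d1 d2 d3 hW] h5; split=> //.
  by rewrite h3 h4.
  split=> //; first by rewrite disjoint_sym.
  by rewrite hW; apply/setP => z; rewrite !inE; do 3!case: (z \in _).
move=> u v uB vA; rewrite esym; exact: h5.
Qed.

Lemma sep_exists (W : {set T}) : k.+2 <= #|W| -> exists S A B, sepP W S A B.
Proof.
move=> hW.
have nk : ~ k1_connected k W (fW e W) by move=> h; apply: Hno; exact: has_of_conn h.
have [S0 hS0] : exists S0 : {set T}, ~ (S0 \subset W -> #|S0| = k ->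
     connected_on (W :\: S0) (fW e W) /\ 2 <= #|W :\: S0|).
  apply: NNPP => h0; apply: nk; split => // S1; apply: NNPP => h1; apply: h0; by exists S1.
have [S0W hS1] := imply_to_and _ _ hS0.
have [cS0 hn] := imply_to_and _ _ hS1.
set X := W :\: S0.
have c2 : 2 <= #|X| by rewrite /X cardsDS // cS0; lia.
have hc : ~ connected_on X (fW e W) by move=> h; apply: hn; split.
set Rr := [rel u v | [&& u \in X, v \in X & fW e W u v]].
have [x [y [xX [yX nxy]]]] : exists x y, x \in X /\ y \in X /\ ~~ connect Rr x y.
  apply: NNPP => h; apply: hc => x y xX yX; apply: NNPP => h2; apply: h.
  exists x, y; split=> //; split=> //; exact/negP.
have [xS xW] : x \notin S0 /\ x \in W by move: xX; rewrite inE => /andP[].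
have [yS yW] : y \notin S0 /\ y \in W by move: yX; rewrite inE => /andP[].
exists S0, [set z in X | connect Rr x z], (X :\: [set z in X | connect Rr x z]); split => //.
- apply/andP; split.
    by apply/set0Pn; exists x; rewrite !inE xS xW connect0.
  apply/set0Pn; exists y; rewrite !inE yS yW /= andbT.
  by apply/negP => h; rewrite h in nxy.
- split.
  + apply/pred0P => z; rewrite /= !inE; apply/negP => /andP[/andP[/andP[zS _] _] zS'].
    by rewrite zS' in zS.
  + apply/pred0P => z; rewrite /= !inE; apply/negP => /andP[/andP[_ /andP[zS _]] zS'].
    by rewrite zS' in zS.
  + apply/pred0P => z; rewrite /= !inE; apply/negP => /andP[/andP[zX cz] /andP[/negP h _]].
    by apply: h; rewrite zX cz.
  + apply/setP => z; rewrite !inE; case zS: (z \in S0).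
      by rewrite (subsetP S0W z zS) !orbT.
    rewrite orbF; case zW: (z \in W); rewrite ?andbF ?andbT //=.
    by case: (connect Rr x z).
- move=> u v; rewrite !inE => /andP[uX cu] /andP[/negP nv vX]; apply/negP => euv.
  apply: nv; rewrite vX /=; apply: (connect_trans cu); apply: connect1.
  move: uX vX => /andP[uS uW] /andP[vS vW].
  by rewrite /= !inE uS uW vS vW /fW /= uW vW euv.
Qed.

Lemma sep_count W S A B : sepP W S A B ->
  E2 e W W = E2 e (A :|: S) (A :|: S) + (E2 e B B + 2 * E2 e B S).
Proof.
case=> _ _ _ [d1 d2 d3 hW] h5.
have dAS : [disjoint A :|: S & B] by rewrite -setI_eq0 setIUl (disjoint_setI0 d3) set0U setIC (disjoint_setI0 d2).
rewrite hW E2_UU // [E2 e (A :|: S) B]E2_Ul // (E2_zero h5) add0n (E2_sym esym S B); lia.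
Qed.

Lemma sep_card W S A B : sepP W S A B ->
  #|W| = #|A| + k + #|B| /\ #|A :|: S| = #|A| + k /\ #|B :|: S| = #|B| + k.
Proof.
case=> _ cS _ [d1 d2 d3 hW] h5.
have dAS : [disjoint A :|: S & B] by rewrite -setI_eq0 setIUl (disjoint_setI0 d3) set0U setIC (disjoint_setI0 d2).
rewrite hW !cardsU !(disjoint_setI0 d1) !(disjoint_setI0 d2) (disjoint_setI0 dAS) !cards0 cS.
lia.
Qed.
End G.


Section G.
Variable T : finType.
Variable e : rel T.
Hypothesis esym : symmetric e.
Hypothesis eirr : irreflexive e.
Variable k : nat.
Hypothesis Hno : ~ has_k1_connected_subgraph e k.

Lemma disj1D (u : T) (X : {set T}) : [disjoint [set u] & X :\ u].
Proof. by rewrite -setI_eq0; apply/eqP/setP => z; rewrite !inE; case: eqP. Qed.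

Lemma E2_rem_self u (X : {set T}) : u \in X ->
  E2 e X X = E2 e (X :\ u) (X :\ u) + 2 * #|Nb e u (X :\ u)|.
Proof.
move=> uX; rewrite -{1 2}(setD1K uX) E2_UU // ?disj1D // E2_set1l.
have -> : #|Nb e u [set u]| = 0.
  apply/eqP; rewrite cards_eq0; apply/eqP/setP => z; rewrite !inE.
  by case: eqP => // ->; rewrite eirr.
rewrite E2_set1l; lia.
Qed.

Lemma E2_rem_l u (X Y : {set T}) : u \in X -> E2 e X Y = #|Nb e u Y| + E2 e (X :\ u) Y.
Proof. by move=> uX; rewrite -{1}(setD1K uX) E2_Ul ?disj1D // E2_set1l. Qed.

Lemma E2_rem_r s (X Y : {set T}) : s \in Y -> E2 e X Y = #|Nb e s X| + E2 e X (Y :\ s).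
Proof.
by move=> sY; rewrite (E2_sym esym) (@E2_rem_l s Y X sY) (E2_sym esym (Y :\ s)).
Qed.

Definition Phi4 (x y : nat) : nat :=
  if x <= k.+1 then 2*x*(x-1) + 4*x*y
  else 2*k*(k+1) + 4*(k+1)*y + 2*(x - k.+1)*(2*k+y-1) + (x - k.+1)*(x - k.+1 + 1).

Lemma Phi4_x x y d : 1 <= k -> k.+2 <= x -> 2*d + 2 <= x + y + k ->
  Phi4 (x-1) y + 4 * d <= Phi4 x y.
Proof.
move=> k1 hx hd; rewrite /Phi4.
have -> : (x <= k.+1) = false by apply/negbTE; rewrite -ltnNge.
case: (leqP (x-1) k.+1) => h.
  have -> : x = k.+2 by lia.
  have -> : k.+2 - 1 = k.+1 by lia.
  have -> : k.+2 - k.+1 = 1 by lia.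
  nia.
set m := x - k.+1.
have -> : x - 1 - k.+1 = m - 1 by rewrite /m; lia.
have hm : 2 <= m by rewrite /m; lia.
have -> : m = (m - 1).+1 by lia.
set j := m - 1.
have hj : x = k + 2 + j by rewrite /j /m; lia.
rewrite hj in hd.
have -> : j.+1 - 1 = j by lia.
nia.
Qed.

Lemma Phi4_y x y : 1 <= k -> k.+2 <= x -> 1 <= y -> Phi4 x (y-1) + 4 * k <= Phi4 x y.
Proof.
move=> k1 hx hy; rewrite /Phi4.
have -> : (x <= k.+1) = false by apply/negbTE; rewrite -ltnNge.
have -> : x = k.+2 + (x - k.+2) by lia.
set j := x - k.+2.
have -> : k.+2 + j - k.+1 = j.+1 by lia.
have -> : y = (y - 1).+1 by lia.
set z := y - 1.
have -> : z.+1 - 1 = z by lia.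
nia.
Qed.

Lemma KL1 (A S : {set T}) : 1 <= k -> [disjoint A & S] ->
  2 * (E2 e A A + 2 * E2 e A S) <= Phi4 #|A| #|S|.
Proof.
move=> k1; move: {2}(#|A| + #|S|) (leqnn (#|A| + #|S|)) => n.
elim: n A S => [|n IH] A S hn dAS.
  have A0 : #|A| = 0 by lia.
  have S0 : #|S| = 0 by lia.
  move/eqP: A0; rewrite cards_eq0 => /eqP ->; rewrite /E2 !big_set0 /Phi4 cards0; lia.
case: (leqP #|A| k.+1) => hA.
  have h1 := E2_self eirr A; have h2 := E2_le e A S.
  rewrite /Phi4 hA; nia.
set W := A :|: S.
have cW : #|W| = #|A| + #|S| by rewrite /W cardsU (disjoint_setI0 dAS) cards0 subn0.
case: (boolP [exists u in A, 2 * #|Nb e u W| + 2 <= #|W| + k]).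
  case/exists_inP => u uA hu.
  have dA' : [disjoint A :\ u & S].
    rewrite -setI_eq0; apply/eqP/setP => z; rewrite !inE.
    apply/negbTE; apply/negP => /andP[/andP[_ zA] zS].
    by move/pred0P: dAS => /(_ z); rewrite /= zA zS.
  have cA' : #|A :\ u| = #|A| - 1 by rewrite (cardsD1 u A) uA; lia.
  have IH' := IH (A :\ u) S ltac:(lia) dA'.
  rewrite cA' in IH'.
  rewrite (E2_rem_self uA) (E2_rem_l S uA).
  have dU : [disjoint A :\ u & S] := dA'.
  have hd : #|Nb e u (A :\ u)| + #|Nb e u S| <= #|Nb e u W|.
    rewrite -!E2_set1l -E2_Ur //; rewrite !E2_set1l; apply: subset_leq_card.
    apply/subsetP => z; rewrite !inE => /andP[h ->]; rewrite andbT.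
    by move: h => /orP[/andP[_ ->]| ->]; rewrite ?orbT.
  have hu' : 2 * #|Nb e u W| + 2 <= #|A| + #|S| + k by rewrite -cW.
  have h := @Phi4_x #|A| #|S| #|Nb e u W| k1 hA hu'.
  nia.
move=> nu.
case: (boolP [exists s in S, #|Nb e s A| <= k]).
  case/exists_inP => s sS hs.
  have dS' : [disjoint A & S :\ s].
    rewrite -setI_eq0; apply/eqP/setP => z; rewrite !inE.
    apply/negbTE; apply/negP => /andP[zA /andP[_ zS]].
    by move/pred0P: dAS => /(_ z); rewrite /= zA zS.
  have cS' : #|S :\ s| = #|S| - 1 by rewrite (cardsD1 s S) sS; lia.
  have hy : 1 <= #|S| by rewrite (cardsD1 s S) sS.
  have IH' := IH A (S :\ s) ltac:(lia) dS'.
  rewrite cS' in IH'.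
  have := @Phi4_y #|A| #|S| k1 hA hy.
  rewrite (E2_rem_r A sS); nia.
move=> ns; exfalso; apply: Hno; apply: (has_of_conn esym eirr (W := W)).
apply: (conn_lemma esym eirr (A := A)).
- exact: subsetUl.
- exact: hA.
- move=> u uA; move/exists_inPn: nu => /(_ u uA); rewrite -ltnNge; lia.
- move=> s sW sA; have sS : s \in S by move: sW; rewrite inE (negbTE sA).
  by move/exists_inPn: ns => /(_ s sS); rewrite -ltnNge.
Qed.
End G.


Lemma ar1a k b : 1 <= b -> 2*b < 3*k -> b <= k.+1 -> 3 * (2*b*(b-1) + 4*b*k) <= 19 * k * b.
Proof. move=> *; nia. Qed.

Lemma ar1b k m : 2*(k+2+m) < 3*k ->
  3 * (2*k*(k+1) + 4*(k+1)*k + 2 * m.+1 * (2*k+k-1) + m.+1*(m.+1 + 1)) <= 19 * k * (k + 2 + m).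
Proof. move=> *; nia. Qed.

Lemma ar2a k a b : 2 <= k -> 1 <= b -> b <= a -> 2*a < 3*k -> 3*k <= 2*(a+b) -> b <= k.+1 ->
  4*(3*k*(k-1)+6*k*a+a*a) + 6*(2*b*(b-1) + 4*b*k) <= 38*k*(a+b).
Proof. move=> *; nia. Qed.

Lemma ar2b k a j : 2 <= k -> k + 2 + j <= a -> 2*a < 3*k ->
  4*(3*k*(k-1)+6*k*a+a*a) + 6*(2*k*(k+1) + 4*(k+1)*k + 2 * j.+1 * (2*k+k-1) + j.+1*(j.+1 + 1)) <= 38*k*(a+(k+2+j)).
Proof. move=> *; nia. Qed.

Lemma ar1 k b : 1 <= b -> 2*b < 3*k -> 3 * Phi4 k b k <= 19 * k * b.
Proof.
move=> h1 h2; rewrite /Phi4; case: (leqP b k.+1) => h3; first exact: ar1a.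
have E : b = k + 2 + (b - k.+2) by lia.
have := @ar1b k (b - k.+2) ltac:(lia).
have -> : b - k.+1 = (b - k.+2).+1 by lia.
by rewrite -E.
Qed.

Lemma ar2 k a b : 2 <= k -> 1 <= b -> b <= a -> 2*a < 3*k -> 3*k <= 2*(a+b) ->
  4*(3*k*(k-1)+6*k*a+a*a) + 6 * Phi4 k b k <= 38*k*(a+b).
Proof.
move=> h1 h2 h3 h4 h5; rewrite /Phi4; case: (leqP b k.+1) => h6; first exact: ar2a.
have E : b = k + 2 + (b - k.+2) by lia.
have := @ar2b k a (b - k.+2) h1 ltac:(lia) h4.
have -> : b - k.+1 = (b - k.+2).+1 by lia.
by rewrite -E.
Qed.

Lemma ar_q k a b X Y Z : b <= a -> 3*X <= 3*k*(k-1)+6*k*a+a*a -> Y <= b*(b-1) -> Z <= b*k ->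
  3*(X + (Y + 2*Z)) <= 3*k*(k-1) + 6*k*(a+b) + (a+b)*(a+b).
Proof.
move=> h1 h2 h3 h4.
have : b * b <= a * b by apply: leq_mul.
nia.
Qed.

Lemma ar_l1 k a b X Y Z U : 6*X <= 19*k*a -> 6*(Y + 2*Z + U) <= 19*k*b ->
  6*(X + (Y + 2*Z)) <= 19*k*(a+b).
Proof. rewrite mulnDr; lia. Qed.

Lemma ar_l2 k a b X E P : 6*X <= 19*k*a -> 2*E <= P -> 3*P <= 19*k*b ->
  6*(X + E) <= 19*k*(a+b).
Proof. rewrite mulnDr; lia. Qed.

Lemma ar_l3 k a b X E P Qa : 3*X <= Qa -> 2*E <= P -> 4*Qa + 6*P <= 38*k*(a+b) ->
  6*(X + E) <= 19*k*(a+b).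
Proof. move=> h1 h2 h3. have : 38*k*(a+b) = 2*(19*k*(a+b)) by rewrite !mulnA. lia. Qed.

Section G.
Variable T : finType.
Variable e : rel T.
Hypothesis esym : symmetric e.
Hypothesis eirr : irreflexive e.
Variable k : nat.
Hypothesis k2 : 2 <= k.
Hypothesis Hno : ~ has_k1_connected_subgraph e k.

Definition Q (x : nat) := 3*k*(k-1) + 6*k*x + x*x.

Lemma quad (W : {set T}) : k <= #|W| -> 3 * E2 e W W <= Q (#|W| - k).
Proof.
move: {2}#|W| (leqnn #|W|) => n; elim: n W => [|n IH] W hn hk.
  have h := E2_self eirr W; rewrite /Q; nia.
case: (leqP #|W| k.+1) => hW.
  have h := E2_self eirr W; rewrite /Q.
  have [Hc|Hc] : #|W| = k \/ #|W| = k.+1 by lia.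
    rewrite Hc in h *; rewrite subnn; nia.
  rewrite Hc in h *; have -> : k.+1 - k = 1 by lia.
  nia.
have [S [A [B hs]]] := sep_exists esym eirr Hno hW.
wlog hab : A B hs / #|B| <= #|A|.
  move=> H; case: (leqP #|B| #|A|) => h; first exact: H h.
  apply: (H B A (sepP_sym esym hs)); lia.
have [cW [cA cB]] := sep_card hs.
case: hs => S1 S2 /andP[A0 B0] [d1 d2 d3 hW'] h5.
have hs : sepP e k W S A B by split => //; rewrite A0 B0.
have b1 : 0 < #|B| by rewrite card_gt0.
rewrite (sep_count esym hs).
have IH' := IH (A :|: S) ltac:(lia) ltac:(lia).
rewrite cA in IH'.
have t1 := E2_self eirr B; have t2 := E2_le e B S.
rewrite S2 in t2.
rewrite cW.
have -> : #|A| + k + #|B| - k = #|A| + #|B| by lia.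
rewrite addnK in IH'.
exact: ar_q hab IH' t1 t2.
Qed.

Lemma lin (W : {set T}) : k <= #|W| -> 3 * k <= 2 * (#|W| - k) -> 6 * E2 e W W <= 19 * k * (#|W| - k).
Proof.
move: {2}#|W| (leqnn #|W|) => n; elim: n W => [|n IH] W hn hk hx.
  lia.
have hW : k.+2 <= #|W| by lia.
have [S [A [B hs]]] := sep_exists esym eirr Hno hW.
have key : forall A B, sepP e k W S A B -> 3*k <= 2 * #|A| ->
    6 * E2 e W W <= 19 * k * (#|W| - k).
  move=> A' B' hs' hA'.
  have [cW [cA cB]] := sep_card hs'.
  rewrite (sep_count esym hs').
  case: hs' => S1 S2 /andP[A0 B0] [d1 d2 d3 hW'] h5.
  have b1 : 0 < #|B'| by rewrite card_gt0.
  have IHa := IH (A' :|: S) ltac:(lia) ltac:(lia) ltac:(lia).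
  rewrite cA in IHa.
  rewrite addnK in IHa.
  rewrite cW; have -> : #|A'| + k + #|B'| - k = #|A'| + #|B'| by lia.
  case: (leqP (3 * k) (2 * #|B'|)) => hb.
    have IHb := IH (B' :|: S) ltac:(lia) ltac:(lia) ltac:(lia).
    rewrite cB in IHb.
    rewrite addnK in IHb.
    have dBS : [disjoint B' & S] := d2.
    have hU := E2_UU esym dBS.
    apply: (ar_l1 (U := E2 e S S) IHa); by rewrite -hU.
  have := KL1 esym eirr Hno (ltnW k2) d2; rewrite S2 => hk1.
  exact: ar_l2 IHa hk1 (ar1 b1 hb).
case: (leqP (3 * k) (2 * #|A|)) => ha; first (move: (key A B hs ha); apply).
case: (leqP (3 * k) (2 * #|B|)) => hb; first by apply: (key B A (sepP_sym esym hs)); rewrite hb.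
wlog hab : A B hs ha hb / #|B| <= #|A|.
  move=> H; case: (leqP #|B| #|A|) => h; first exact: H h.
  apply: (H B A (sepP_sym esym hs)) => //; lia.
have [cW [cA cB]] := sep_card hs.
rewrite (sep_count esym hs).
case: hs => S1 S2 /andP[A0 B0] [d1 d2 d3 hW'] h5.
have b1 : 0 < #|B| by rewrite card_gt0.
have q := quad (W := A :|: S) ltac:(lia).
rewrite cA in q; rewrite addnK in q.
have := KL1 esym eirr Hno (ltnW k2) d2; rewrite S2 => hk1.
rewrite cW; have -> : #|A| + k + #|B| - k = #|A| + #|B| by lia.
have h2 := @ar2 k #|A| #|B| k2 b1 hab ha ltac:(lia).
exact: ar_l3 q hk1 h2.
Qed.
End G.


Section G.
Variable T : finType.
Variable e : rel T.
Hypothesis esym : symmetric e.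
Hypothesis eirr : irreflexive e.

Lemma E2T : E2 e setT setT = #|[set p : T * T | e p.1 p.2]|.
Proof.
rewrite /E2; under eq_bigr => u _ do rewrite Nb_sum.
have h1 : forall F : T -> nat, \sum_(u in [set: T]) F u = \sum_u F u.
  by move=> F; apply: eq_bigl => u; rewrite inE.
rewrite h1; under eq_bigr => u _ do rewrite h1.
rewrite pair_bigA /= -sum1_card [RHS]big_mkcond /=.
apply: eq_bigr => p _; rewrite inE; by case: (e p.1 p.2).
Qed.

Lemma pair_eq (x y a b : T) : e x y ->
  (e a b && ([set a; b] == [set x; y])) = ((a, b) \in [set (x, y); (y, x)]).
Proof.
move=> exy; rewrite !inE !xpair_eqE.
apply/idP/idP.
  move=> /andP[eab /eqP hs].
  have ha : a \in [set x; y] by rewrite -hs !inE eqxx.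
  have hb : b \in [set x; y] by rewrite -hs !inE eqxx orbT.
  have ab : a != b by apply/eqP => h; rewrite h eirr in eab.
  move: ha hb; rewrite !inE => /orP[]/eqP ha /orP[]/eqP hb; subst a b => //.
  - by rewrite eqxx in ab.
  - by rewrite !eqxx.
  - by rewrite !eqxx orbT.
  - by rewrite eqxx in ab.
move=> /orP[]/andP[/eqP -> /eqP ->]; first by rewrite exy eqxx.
rewrite esym exy /=; apply/eqP/setP => z; rewrite !inE orbC //.
Qed.

Lemma edges_count : #|[set p : T * T | e p.1 p.2]| = 2 * #|edges e|.
Proof.
rewrite -sum1_card (partition_big_imset (fun p : T * T => [set p.1; p.2])).
have -> : [set [set p.1; p.2] | p in [set p : T * T | e p.1 p.2]] = edges e.
  by apply/setP => E; rewrite /edges.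
rewrite mulnC -sum_nat_const; apply: eq_bigr => E /imsetP [[x y]]; rewrite inE /= => exy ->.
rewrite (eq_bigl (fun p => p \in [set (x, y); (y, x)])) => [|[a b]]; last first.
  by rewrite inE /= -(pair_eq _ _ exy).
rewrite sum1_card cards2; case: eqP => // [[h _]].
by rewrite h eirr in exy.
Qed.
End G.

Unset Implicit Arguments.
Import Order.TTheory GRing.Theory Num.Theory.
Local Open Scope ring_scope.

Theorem theorem2 (k : nat) (T : finType) (e : rel T) (gamma : rat) :
  (2 <= k)%N ->
  symmetric e -> irreflexive e ->
  (#|T|%:R : rat) = gamma * k%:R ->
  5%:R / 2%:R <= gamma ->
  (#|edges e|%:R : rat) / (k%:R ^+ 2) > 19%:R / 12%:R * (gamma - 1) ->
  has_k1_connected_subgraph e k.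
Proof.
move=> k2 esym eirr hT hg hE.
apply: NNPP => Hno.
have K0 : (0 : rat) < k%:R by rewrite ltr0n; lia.
have hN : (5 * k <= 2 * #|T|)%N.
  rewrite -(ler_nat rat) !natrM hT.
  have h : 5%:R / 2%:R * k%:R <= gamma * (k%:R : rat) by rewrite ler_pM2r.
  lra.
have hE' : (19 * k * (#|T| - k) < 12 * #|edges e|)%N.
  rewrite -(ltr_nat rat) !natrM natrB; last by lia.
  rewrite ltr_pdivlMr ?exprn_gt0 // in hE.
  rewrite hT.
  have eq1 : 19%:R / 12%:R * (gamma - 1) * (k%:R : rat) ^+ 2 = 19%:R / 12%:R * ((gamma * k%:R - k%:R) * k%:R).
    by ring.
  rewrite eq1 in hE.
  have eq2 : (19%:R * k%:R * (gamma * k%:R - k%:R) : rat) = 12%:R * (19%:R / 12%:R * ((gamma * k%:R - k%:R) * k%:R)).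
    by field.
  rewrite eq2 ltr_pM2l ?ltr0n //.
have hW : (k <= #|[set: T]|)%N by rewrite cardsT; lia.
have hx : (3 * k <= 2 * (#|[set: T]| - k))%N by rewrite cardsT; lia.
have := lin esym eirr k2 Hno hW hx.
rewrite E2T // edges_count // cardsT.
lia.
Qed.
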